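(* Let $\lambda_1,\lambda_2\in P^+$ and $c_1\ne c_2\in\mathbb C$. Then there is a surjective homomorphism of $\mathfrak{sl}_n\otimes\mathbb C[t]$-modules $F_{\lambda_1,\lambda_2}\twoheadrightarrow V(\lambda_1)_{c_1}\ast V(\lambda_2)_{c_2}$. Moreover $a^\tau_{\lambda_1,\lambda_2}\ge c^\tau_{\lambda_1,\lambda_2}$ for all $\tau\in P^+$.
   Context: $\mathfrak{sl}_n=\mathfrak n^+\oplus\mathfrak h\oplus\mathfrak n^-$, $R^+$ positive roots, $P^+$ dominant integral weights, $V(\mu)$ the simple module of highest weight $\mu$ with highest weight vector $v_\mu$; for $\alpha\in R^+$ fix an $\mathfrak{sl}_2$-triple $e_\alpha,f_\alpha,h_\alpha$ with $f_\alpha\in\mathfrak g_{-\alpha}$. $c^\tau_{\lambda_1,\lambda_2}$ is the multiplicity of $V(\tau)$ in $V(\lambda_1)\otimes V(\lambda_2)$. The current algebra $\mathfrak{sl}_n\otimes\mathbb C[t]$ has bracket $[x\otimes p,y\otimes q]=[x,y]\otimes pq$, graded by $t$-degree. For $\lambda=\lambda_1+\lambda_2$, $F_{\lambda_1,\lambda_2}$ is the $\mathfrak{sl}_n\otimes\mathbb C[t]$-module generated by $\mathbb 1$ subject to $(\mathfrak n^+\otimes\mathbb C[t]).\mathbb 1=0$, $(\mathfrak h\otimes t\mathbb C[t]).\mathbb 1=0$, $(\mathfrak n^-\otimes t^2\mathbb C[t]).\mathbb 1=0$, $(h\otimes1).\mathbb 1=\lambda(h)\mathbb 1$, and for $\alpha\in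 R^+$: $(f_\alpha\otimes1)^{\lambda(h_\alpha)+1}.\mathbb 1=0$, $(f_\alpha\otimes t)^{\min\{\lambda_1(h_\alpha),\lambda_2(h_\alpha)\}+1}.\mathbb 1=0$; $a^\tau_{\lambda_1,\lambda_2}=\dim\operatorname{Hom}_{\mathfrak{sl}_n}(F_{\lambda_1,\lambda_2},V(\tau))$. For $c\in\mathbb C$, $V(\mu)_c$ is $V(\mu)$ with $(x\otimes p).v=p(c)x.v$. The fusion product $V(\lambda_1)_{c_1}\ast V(\lambda_2)_{c_2}$ ($c_1\ne c_2$) is the associated graded module of $V(\lambda_1)_{c_1}\otimes V(\lambda_2)_{c_2}$ with respect to the filtration $U(\mathfrak{sl}_n\otimes\mathbb C[t])^{\le r}.(v_{\lambda_1}\otimes v_{\lambda_2})$, where $U^{\le r}$ is the span of elements of $t$-degree $\le r$. *)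

(* Defs.v *)
From HB Require Import structures.
From mathcomp Require Import all_boot all_order all_algebra.
From mathcomp Require Import mxtens.
From Stdlib Require Import ClassicalEpsilon.

Set Implicit Arguments.
Unset Strict Implicit.
Unset Printing Implicit Defensive.

Import GRing.Theory.
Local Open Scope ring_scope.

Section LieDefs.
Variables (K : fieldType) (n : nat).

Definition in_sl (x : 'M[K]_n) : Prop := \tr x = 0.
Definition lie (x y : 'M[K]_n) : 'M[K]_n := x *m y - y *m x.

Definition in_nplus (x : 'M[K]_n) : Prop := forall i j : 'I_n, (j <= i)%N -> x i j = 0.
Definition in_nminus (x : 'M[K]_n) : Prop := forall i j : 'I_n, (i <= j)%N -> x i j = 0.
Definition in_cartan (h : 'M[K]_n) : Prop := is_diag_mx h /\ \tr h = 0.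

(* A dominant integral weight  lambda = sum_k m k * omega_k  (k < n-1) is
   represented by its coordinates m k = lambda(h_{alpha_k}) in N.
   omega_k(h) = h_00 + ... + h_kk on diagonal h. *)
Definition domwt := 'I_n.-1 -> nat.
Definition wt (m : domwt) (h : 'M[K]_n) : K :=
  \sum_(k < n.-1) (m k)%:R * \sum_(l < n | (l <= k)%N) h l l.
Definition wt_add (m1 m2 : domwt) : domwt := fun k => (m1 k + m2 k)%N.
(* For the positive root alpha = eps_i - eps_j (i < j): lambda(h_alpha),
   h_alpha = E_ii - E_jj. *)
Definition wt_coroot (m : domwt) (i j : 'I_n) : nat :=
  (\sum_(k < n.-1 | (i <= k) && (k < j)) m k)%N.
Definition f_root (i j : 'I_n) : 'M[K]_n := delta_mx j i.

Definition is_sl_mod (V : lmodType K) (a : 'M[K]_n -> V -> V) : Prop :=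
  [/\ forall x y c v, in_sl x -> in_sl y -> a (c *: x + y) v = c *: a x v + a y v,
      forall x c u v, in_sl x -> a x (c *: u + v) = c *: a x u + a x v &
      forall x y v, in_sl x -> in_sl y ->
        a (lie x y) v = a x (a y v) - a y (a x v)].

(* A module over the current algebra sl_n (x) K[t]:  a x p v = (x (x) p).v *)
Definition is_cur_mod (V : lmodType K) (a : 'M[K]_n -> {poly K} -> V -> V) : Prop :=
  [/\ forall x y p c v, in_sl x -> in_sl y -> a (c *: x + y) p v = c *: a x p v + a y p v,
      forall x p q c v, in_sl x -> a x (c *: p + q) v = c *: a x p v + a x q v,
      forall x p c u v, in_sl x -> a x p (c *: u + v) = c *: a x p u + a x p v &
      forall x y p q v, in_sl x -> in_sl y ->
        a (lie x y) (p * q) v = a x p (a y q v) - a y q (a x p v)].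

Definition mx_act d (rho : 'M[K]_n -> 'M[K]_d) (x : 'M[K]_n) (v : 'rV[K]_d) : 'rV[K]_d :=
  v *m rho x.

Definition is_simple_hw (mu : domwt) d (rho : 'M[K]_n -> 'M[K]_d) (v : 'rV[K]_d) : Prop :=
  [/\ @is_sl_mod _ (mx_act rho),
      forall U : 'M[K]_d, (forall x, in_sl x -> (U *m rho x <= U)%MS) ->
        (U == (0 : 'M[K]_d))%MS \/ (1%:M <= U)%MS,
      v != 0,
      forall x, in_nplus x -> v *m rho x = 0 &
      forall h, in_cartan h -> v *m rho h = wt mu h *: v].

(* The evaluation module V(mu)_c tensor V(nu)_c' : the action of x (x) p on
   V1 (x) V2 (Kronecker product realisation, row vectors). *)
Definition tens_act d1 d2 (rho1 : 'M[K]_n -> 'M[K]_d1) (rho2 : 'M[K]_n -> 'M[K]_d2)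
  (c1 c2 : K) (x : 'M[K]_n) (p : {poly K}) : 'M[K]_(d1 * d2) :=
  p.[c1] *: (rho1 x *t (1%:M : 'M[K]_d2)) + p.[c2] *: ((1%:M : 'M[K]_d1) *t rho2 x).

Definition in_span D (P : 'rV[K]_D -> Prop) (v : 'rV[K]_D) : Prop :=
  exists s : seq 'rV[K]_D, (forall u, u \in s -> P u) /\
    (v <= \matrix_(i < size s) s`_i)%MS.
Definition span_of D (P : 'rV[K]_D -> Prop) : 'M[K]_D :=
  epsilon (inhabits 0) (fun M : 'M[K]_D => forall v, (v <= M)%MS <-> in_span P v).

(* mono A w k v : v = u.w for a monomial u = (x_1 (x) t^{j_1})...(x_m (x) t^{j_m})
   of U(sl_n (x) K[t]) of t-degree k = j_1 + ... + j_m. *)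
Inductive mono D (A : 'M[K]_n -> {poly K} -> 'M[K]_D) (w : 'rV[K]_D) :
    nat -> 'rV[K]_D -> Prop :=
  | mono0 : mono A w 0 w
  | monoS k j x v : in_sl x -> mono A w k v -> mono A w (k + j) (v *m A x 'X^j).

Definition filt D (A : 'M[K]_n -> {poly K} -> 'M[K]_D) (w : 'rV[K]_D) (r : nat) : 'M[K]_D :=
  span_of (fun v => exists2 k, (k <= r)%N & mono A w k v).
Definition filtm1 D (A : 'M[K]_n -> {poly K} -> 'M[K]_D) (w : 'rV[K]_D) (r : nat) : 'M[K]_D :=
  if r is r'.+1 then filt A w r' else 0.
(* the graded piece gr_r = W_r / W_{r-1}, realised as the complement
   W_r :\: W_{r-1} of W_{r-1} in W_r *)
Definition grpiece D (A : 'M[K]_n -> {poly K} -> 'M[K]_D) (w : 'rV[K]_D) (r : nat) : 'M[K]_D :=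
  (filt A w r :\: filtm1 A w r)%MS.
(* the quotient map W_r -> W_r / W_{r-1} ~= gr_r *)
Definition grproj D (A : 'M[K]_n -> {poly K} -> 'M[K]_D) (w : 'rV[K]_D) (r : nat) : 'M[K]_D :=
  proj_mx (grpiece A w r) (filtm1 A w r).

(* elements of the associated graded module gr = (+)_r gr_r:
   families g with g r in gr_r (only finitely many gr_r are nonzero) *)
Definition in_gr D (A : 'M[K]_n -> {poly K} -> 'M[K]_D) (w : 'rV[K]_D)
  (g : nat -> 'rV[K]_D) : Prop := forall r, (g r <= grpiece A w r)%MS.
(* action of x (x) p on gr: (x (x) t^k) [v]_r = [ (x (x) t^k) v ]_{r+k} *)
Definition gr_act D (A : 'M[K]_n -> {poly K} -> 'M[K]_D) (w : 'rV[K]_D)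
  (x : 'M[K]_n) (p : {poly K}) (g : nat -> 'rV[K]_D) : nat -> 'rV[K]_D :=
  fun s => \sum_(k < s.+1) p`_k *: (g (s - k)%N *m A x 'X^k *m grproj A w s).

Definition F_rel (l1 l2 : domwt) (V : lmodType K) (a : 'M[K]_n -> {poly K} -> V -> V)
  (v : V) : Prop :=
  [/\ forall x p, in_nplus x -> a x p v = 0,
      forall h p, in_cartan h -> p.[0] = 0 -> a h p v = 0,
      forall x (p : {poly K}), in_nminus x -> p`_0 = 0 -> p`_1 = 0 -> a x p v = 0,
      forall h, in_cartan h -> a h 1 v = wt (wt_add l1 l2) h *: v &
      (forall i j : 'I_n, (i < j)%N ->
        iter (wt_coroot (wt_add l1 l2) i j).+1 (a (f_root i j) 1) v = 0) /\
      (forall i j : 'I_n, (i < j)%N ->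
        iter (minn (wt_coroot l1 i j) (wt_coroot l2 i j)).+1 (a (f_root i j) 'X) v = 0)].

Inductive gen (V : lmodType K) (a : 'M[K]_n -> {poly K} -> V -> V) (v : V) : V -> Prop :=
  | gen_base : gen a v v
  | gen_add u u' : gen a v u -> gen a v u' -> gen a v (u + u')
  | gen_scale c u : gen a v u -> gen a v (c *: u)
  | gen_act x p u : in_sl x -> gen a v u -> gen a v (a x p u).

(* (V, a, one) is a presentation of F_{l1,l2}: the current-algebra module
   generated by one subject (only) to the relations F_rel, i.e. it is generated
   by one, one satisfies the relations, and it has the universal property. *)
Definition is_F (l1 l2 : domwt) (V : lmodType K) (a : 'M[K]_n -> {poly K} -> V -> V)
  (one : V) : Prop :=
  [/\ is_cur_mod a, F_rel l1 l2 a one, (forall u, gen a one u) &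
      forall (W : lmodType K) (b : 'M[K]_n -> {poly K} -> W -> W) (w : W),
        is_cur_mod b -> F_rel l1 l2 b w ->
        exists phi : V -> W,
          [/\ forall c u u', phi (c *: u + u') = c *: phi u + phi u',
              phi one = w &
              forall x p u, in_sl x -> phi (a x p u) = b x p (phi u)]].

End LieDefs.

(* Main.v *)
Require Import Defs.
From HB Require Import structures.
From mathcomp Require Import all_boot all_order all_algebra.
From mathcomp Require Import reals complex mxtens.
From mathcomp Require Import boolp functions.
From mathcomp Require Import ring.
From Stdlib Require Import ClassicalEpsilon.
Set Implicit Arguments.
Unset Strict Implicit.
Unset Printing Implicit Defensive.
Import GRing.Theory Num.Theory.
Local Open Scope ring_scope.
Section Basic.
Variable K : fieldType.

Lemma mx_ext m n (M N : 'M[K]_(m,n)) : (forall v : 'rV_m, v *m M = v *m N) -> M = N.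
Proof. by move=> H; apply/row_matrixP => i; rewrite !rowE H. Qed.

Lemma tensmxDl m n p q (A B : 'M[K]_(m,n)) (C : 'M[K]_(p,q)) :
  (A + B) *t C = A *t C + B *t C.
Proof. by apply/matrixP=> i j; rewrite !mxE mulrDl. Qed.
Lemma tensmxDr m n p q (A : 'M[K]_(m,n)) (B C : 'M[K]_(p,q)) :
  A *t (B + C) = A *t B + A *t C.
Proof. by apply/matrixP=> i j; rewrite !mxE mulrDr. Qed.
Lemma tensmxZl m n p q c (A : 'M[K]_(m,n)) (C : 'M[K]_(p,q)) :
  (c *: A) *t C = c *: (A *t C).
Proof. by apply/matrixP=> i j; rewrite !mxE mulrA. Qed.
Lemma tensmxZr m n p q c (A : 'M[K]_(m,n)) (C : 'M[K]_(p,q)) :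
  A *t (c *: C) = c *: (A *t C).
Proof. by apply/matrixP=> i j; rewrite !mxE mulrCA. Qed.
Lemma tensmxNl m n p q (A : 'M[K]_(m,n)) (C : 'M[K]_(p,q)) :
  (- A) *t C = - (A *t C).
Proof. by apply/matrixP=> i j; rewrite !mxE mulNr. Qed.
Lemma tensmxNr m n p q (A : 'M[K]_(m,n)) (C : 'M[K]_(p,q)) :
  A *t (- C) = - (A *t C).
Proof. by apply/matrixP=> i j; rewrite !mxE mulrN. Qed.

Variable n : nat.

Lemma in_sl0 : in_sl (0 : 'M[K]_n).
Proof. by rewrite /in_sl mxtrace0. Qed.
Lemma in_slD c (x y : 'M[K]_n) : in_sl x -> in_sl y -> in_sl (c *: x + y).
Proof. by rewrite /in_sl mxtraceD mxtraceZ => -> ->; rewrite mulr0 addr0. Qed.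
Lemma in_slZ c (x : 'M[K]_n) : in_sl x -> in_sl (c *: x).
Proof. by move=> h; have := in_slD c h in_sl0; rewrite addr0. Qed.
Lemma in_sl_lie (x y : 'M[K]_n) : in_sl (lie x y).
Proof. by rewrite /in_sl /lie raddfB /= mxtrace_mulC subrr. Qed.
Lemma in_sl_nplus (x : 'M[K]_n) : in_nplus x -> in_sl x.
Proof. by move=> h; rewrite /in_sl /mxtrace big1 // => i _; rewrite h. Qed.
Lemma in_sl_nminus (x : 'M[K]_n) : in_nminus x -> in_sl x.
Proof. by move=> h; rewrite /in_sl /mxtrace big1 // => i _; rewrite h. Qed.
Lemma in_sl_cartan (x : 'M[K]_n) : in_cartan x -> in_sl x.
Proof. by case. Qed.
Lemma in_sl_delta (i j : 'I_n) : i != j -> in_sl (delta_mx i j : 'M[K]_n).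
Proof.
move=> ij; rewrite /in_sl /mxtrace big1 // => l _; rewrite mxE.
by case: (l =P i) => [->|]; [rewrite (negbTE ij) | ].
Qed.

Variables (d : nat) (rho : 'M[K]_n -> 'M[K]_d) (Hr : is_sl_mod (mx_act rho)).

Lemma rho_lin c x y : in_sl x -> in_sl y -> rho (c *: x + y) = c *: rho x + rho y.
Proof.
case: Hr => H1 _ _ hx hy; apply: mx_ext => v.
by have := H1 x y c v hx hy; rewrite /mx_act => ->; rewrite mulmxDr scalemxAr.
Qed.
Lemma rho_lie x y : in_sl x -> in_sl y -> rho (lie x y) = rho y *m rho x - rho x *m rho y.
Proof.
case: Hr => _ _ H3 hx hy; apply: mx_ext => v.
by have := H3 x y v hx hy; rewrite /mx_act => ->; rewrite mulmxBr !mulmxA.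
Qed.
Lemma rho0 : rho 0 = 0.
Proof.
have := rho_lin 1 in_sl0 in_sl0; rewrite scaler0 addr0 scale1r => h.
by apply: (addrI (rho 0)); rewrite addr0 -h.
Qed.
Lemma rhoZ c x : in_sl x -> rho (c *: x) = c *: rho x.
Proof. by move=> hx; have := rho_lin c hx in_sl0; rewrite !addr0 rho0 addr0. Qed.
Lemma rhoD x y : in_sl x -> in_sl y -> rho (x + y) = rho x + rho y.
Proof. by move=> hx hy; have := rho_lin 1 hx hy; rewrite !scale1r. Qed.
End Basic.
Section SL2.
Variables (K : numFieldType) (d : nat) (E F H : 'M[K]_d) (v : 'rV[K]_d) (m : nat).
Hypotheses (hH : H = F *m E - E *m F) (hFH : F *m H = H *m F - 2%:R *: F)
  (hvE : v *m E = 0) (hvH : v *m H = m%:R *: v).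

Lemma mxexpSr k : F ^+ k.+1 = F ^+ k *m F.
Proof. by rewrite exprSr mulmxE. Qed.

Lemma vFH k : v *m F ^+ k *m H = (m%:R - 2%:R * k%:R) *: (v *m F ^+ k).
Proof.
elim: k => [|k IH]; first by rewrite expr0 mulmx1 hvH mulr0 subr0.
rewrite mxexpSr mulmxA -(mulmxA _ F H) hFH mulmxBr mulmxA IH.
rewrite -scalemxAl -scalemxAr -scalerBl; congr (_ *: _).
rewrite -addn1 natrD; ring.
Qed.

Lemma vFE k : v *m F ^+ k.+1 *m E = (k.+1%:R * (m%:R - k%:R)) *: (v *m F ^+ k).
Proof.
elim: k => [|k IH].
  rewrite expr1 expr0 mulmx1 mul1r subr0 -mulmxA.
  have -> : F *m E = H + E *m F by rewrite hH subrK.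
  by rewrite mulmxDr hvH mulmxA hvE mul0mx addr0.
rewrite [F ^+ k.+2]mxexpSr mulmxA -(mulmxA _ F E).
have -> : F *m E = H + E *m F by rewrite hH subrK.
rewrite mulmxDr vFH mulmxA IH -scalemxAl -mulmxA -mxexpSr -scalerDl; congr (_ *: _).
rewrite -[k.+2]addn1 -[k.+1]addn1 !natrD; ring.
Qed.
End SL2.

Lemma sl2_kill (K : numFieldType) d (E F H : 'M[K]_d) (v : 'rV[K]_d) (m : nat) :
  H = F *m E - E *m F -> F *m H = H *m F - 2%:R *: F ->
  v *m E = 0 -> v *m H = m%:R *: v -> v *m F ^+ m.+1 = 0.
Proof.
move=> hH hFH hvE hvH.
have exP : exists k, v *m F ^+ k == 0.
  apply: contrapT => hnone.
  have hall : forall k, v *m F ^+ k != 0.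
    by move=> k; apply/negP => h; apply: hnone; exists k.
  pose rs := [seq m%:R - 2%:R * (k%:R : K) | k <- iota 0 d.+1].
  have : (size rs < size (char_poly H))%N.
    apply: max_poly_roots.
    - by apply: monic_neq0; apply: char_poly_monic.
    - apply/allP => a /mapP [k _ ->]; rewrite -eigenvalue_root_char.
      apply/eigenvalueP; exists (v *m F ^+ k); first exact: vFH.
      exact: hall.
    - rewrite map_inj_uniq ?iota_uniq // => a b /eqP.
      rewrite (inj_eq (addrI _)) eqr_opp (inj_eq (mulfI _)) ?pnatr_eq0 //.
      by rewrite eqr_nat => /eqP.
  by rewrite size_map size_iota size_char_poly ltnn.
case: (ex_minnP exP) => k0 /eqP hk0 hmin.
case: k0 hk0 hmin => [|k] hk hmin.
  by move: hk; rewrite expr0 mulmx1 => ->; rewrite mul0mx.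
have hne : v *m F ^+ k != 0.
  by apply/negP => /hmin; rewrite ltnn.
have := vFE hH hFH hvE hvH k; rewrite hk mul0mx => /esym/eqP.
rewrite scaler_eq0 (negbTE hne) orbF mulf_eq0 pnatr_eq0 /= subr_eq0 eqr_nat.
by move=> /eqP ->.
Qed.
Section Weights.
Variables (K : fieldType) (n : nat).

Lemma lie_ef (i j : 'I_n) :
  lie (delta_mx i j) (delta_mx j i) = delta_mx i i - delta_mx j j :> 'M[K]_n.
Proof. by rewrite /lie !mul_delta_mx. Qed.

Lemma lie_hf (i j : 'I_n) : i != j ->
  lie (delta_mx i i - delta_mx j j) (delta_mx j i) = (- 2%:R) *: delta_mx j i :> 'M[K]_n.
Proof.
move=> ij; rewrite /lie mulmxBl mulmxBr !mul_delta_mx.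
rewrite mul_delta_mx_0 ?mul_delta_mx_0 // 1?eq_sym //.
by rewrite sub0r subr0 -opprD -mulr2n -scaler_nat scaleNr.
Qed.


Lemma sum_ind (i : 'I_n) (k : nat) :
  \sum_(l < n | (l <= k)%N) ((l == i)%:R : K) = (i <= k)%:R.
Proof.
rewrite big_mkcond (bigD1 i) //= eqxx big1 ?addr0.
  by case: ifP.
by move=> l /negbTE li; rewrite li; case: ifP.
Qed.

Lemma wt_h (m : domwt n) (i j : 'I_n) : (i < j)%N ->
  wt m (delta_mx i i - delta_mx j j : 'M[K]_n) = (wt_coroot m i j)%:R.
Proof.
move=> ij; rewrite /wt /wt_coroot [RHS]natr_sum [RHS]big_mkcond /=; apply: eq_bigr => k _.
have -> : \sum_(l < n | (l <= k)%N) (delta_mx i i - delta_mx j j : 'M[K]_n) l l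
    = \sum_(l < n | (l <= k)%N) (((l == i)%:R : K) - (l == j)%:R).
  by apply: eq_bigr => l _; rewrite !mxE !andbb.
rewrite sumrB !sum_ind.
case: (leqP i k) => ik; case: (leqP j k) => jk /=.
- by rewrite subrr mulr0.
- by rewrite subr0 mulr1.
- by move: (ltn_trans ij (leq_ltn_trans jk ik)); rewrite ltnn.
- by rewrite subr0 mulr0.
Qed.

Lemma nplus_delta (i j : 'I_n) : (i < j)%N -> in_nplus (delta_mx i j : 'M[K]_n).
Proof.
move=> ij a b ba; rewrite mxE; case: eqP => [ai|//]; case: eqP => [bj|] //=.
by move: ba; rewrite ai bj leqNgt ij.
Qed.

Lemma cartan_h (i j : 'I_n) : (i < j)%N -> in_cartan (delta_mx i i - delta_mx j j : 'M[K]_n).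
Proof.
move=> ij; split; last by have := in_sl_lie (delta_mx i j : 'M[K]_n) (delta_mx j i); rewrite lie_ef.
apply/is_diag_mxP => a b ab; rewrite !mxE.
have h1 : forall c : 'I_n, (a == c) && (b == c) = false.
  by move=> c; apply/andP => [[/eqP e1 /eqP e2]]; move: ab; rewrite e1 e2 eqxx.
by rewrite !h1 subrr.
Qed.
End Weights.


Section RepKill.
Variables (K : numFieldType) (n d : nat) (rho : 'M[K]_n -> 'M[K]_d).
Hypotheses (hl : forall c x y, in_sl x -> in_sl y -> rho (c *: x + y) = c *: rho x + rho y)
  (hlie : forall x y, in_sl x -> in_sl y -> rho (lie x y) = rho y *m rho x - rho x *m rho y).

Lemma rhoK0 : rho 0 = 0.
Proof.
have := hl 1 (in_sl0 K n) (in_sl0 K n); rewrite scaler0 addr0 scale1r => h.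
by apply: (addrI (rho 0)); rewrite addr0 -h.
Qed.

Lemma rhoKZ c x : in_sl x -> rho (c *: x) = c *: rho x.
Proof. by move=> hx; have := hl c hx (in_sl0 K n); rewrite !addr0 rhoK0 addr0. Qed.

Lemma rep_kill (i j : 'I_n) (v : 'rV[K]_d) m : i != j ->
  v *m rho (delta_mx i j) = 0 ->
  v *m rho (delta_mx i i - delta_mx j j) = m%:R *: v ->
  v *m rho (delta_mx j i) ^+ m.+1 = 0.
Proof.
move=> ij he hh.
have se : in_sl (delta_mx i j : 'M[K]_n) by apply: in_sl_delta.
have sf : in_sl (delta_mx j i : 'M[K]_n) by apply: in_sl_delta; rewrite eq_sym.
have sh : in_sl (delta_mx i i - delta_mx j j : 'M[K]_n) by rewrite -lie_ef; apply: in_sl_lie.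
apply: (sl2_kill (E := rho (delta_mx i j)) (H := rho (delta_mx i i - delta_mx j j))) => //.
  by rewrite -lie_ef hlie.
have := hlie sh sf; rewrite lie_hf // rhoKZ // => e.
by rewrite -[rho (delta_mx j i) *m _](subrK (rho (delta_mx i i - delta_mx j j) *m rho (delta_mx j i))) -e addrC scaleNr.
Qed.
End RepKill.

Section Span.
Variables (K : fieldType) (D : nat).
Implicit Types (P : 'rV[K]_D -> Prop) (s : seq 'rV[K]_D).

Definition mxs s : 'M[K]_(size s, D) := \matrix_(i < size s) s`_i.

Lemma mem_mxs u s : u \in s -> (u <= mxs s)%MS.
Proof.
move=> us; have := index_mem u s; rewrite us => hi.
by have := row_sub (Ordinal hi) (mxs s); rewrite rowK /= nth_index.
Qed.

Lemma mxs_sub m s (N : 'M[K]_(m, D)) :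
  (forall u, u \in s -> (u <= N)%MS) -> (mxs s <= N)%MS.
Proof. by move=> h; apply/row_subP => i; rewrite rowK; apply: h; apply: mem_nth. Qed.

Lemma mxs_mul_sub m s (B : 'M[K]_D) (N : 'M[K]_(m, D)) :
  (forall u, u \in s -> (u *m B <= N)%MS) -> (mxs s *m B <= N)%MS.
Proof.
by move=> h; apply/row_subP => i; rewrite row_mul rowK; apply: h; apply: mem_nth.
Qed.

Lemma span_exists P : exists M : 'M[K]_D, forall v, (v <= M)%MS <-> in_span P v.
Proof.
pose Q k := `[< exists s, (forall u, u \in s -> P u) /\ \rank (mxs s) = k >].
have Q0 : Q 0%N by apply/asboolP; exists [::]; split => //; rewrite /mxs; apply/eqP; rewrite mxrank_eq0; apply/eqP/matrixP => [[]].
have Qb : forall k, Q k -> (k <= D)%N.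
  by move=> k /asboolP [s [_ <-]]; apply: rank_leq_col.
case: (ex_maxnP (ex_intro _ 0%N Q0) Qb) => k /asboolP [s0 [Ps0 rk0]] kmax.
exists <<mxs s0>>%MS => v; rewrite genmxE; split; first by move=> h; exists s0.
case=> s [Ps vs].
have Pss : forall u, u \in s0 ++ s -> P u.
  by move=> u; rewrite mem_cat => /orP [/Ps0|/Ps].
have h1 : (mxs s0 <= mxs (s0 ++ s))%MS.
  by apply: mxs_sub => u us; apply: mem_mxs; rewrite mem_cat us.
have h2 : (mxs s <= mxs (s0 ++ s))%MS.
  by apply: mxs_sub => u us; apply: mem_mxs; rewrite mem_cat us orbT.
have hle : (\rank (mxs (s0 ++ s)) <= k)%N.
  by apply: kmax; apply/asboolP; exists (s0 ++ s).
have h3 : (mxs (s0 ++ s) <= mxs s0)%MS.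
  have := mxrank_leqif_sup h1; rewrite rk0 => /leqifP.
  by case: ifP => // _ /(leq_ltn_trans hle); rewrite ltnn.
by apply: submx_trans vs (submx_trans h2 h3).
Qed.

Lemma span_ofP P v : (v <= span_of P)%MS <-> in_span P v.
Proof.
rewrite /span_of; move: v.
exact: (epsilon_spec (inhabits 0) (fun M : 'M[K]_D => forall v, (v <= M)%MS <-> in_span P v) (span_exists P)).
Qed.

Lemma span_in P u : P u -> (u <= span_of P)%MS.
Proof.
move=> Pu; apply/span_ofP; exists [:: u]; split.
  by move=> x; rewrite inE => /eqP ->.
by apply: mem_mxs; rewrite inE.
Qed.

Lemma span_map m P (B : 'M[K]_D) (N : 'M[K]_(m, D)) :
  (forall u, P u -> (u *m B <= N)%MS) -> (span_of P *m B <= N)%MS.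
Proof.
move=> h; apply/row_subP => i; rewrite row_mul.
have /span_ofP [s [Ps hs]] := row_sub i (span_of P).
apply: submx_trans (submxMr B hs) _.
by apply: mxs_mul_sub => u us; apply: h; apply: Ps.
Qed.

Lemma span_le m P (N : 'M[K]_(m, D)) :
  (forall u, P u -> (u <= N)%MS) -> (span_of P <= N)%MS.
Proof.
move=> h; rewrite -[span_of P]mulmx1; apply: span_map => u Pu; rewrite mulmx1; exact: h.
Qed.
End Span.
Lemma rearr (V : zmodType) (a b e f g h : V) :
  a - b + (e - f) = a + g + (h + e) - (b + h + (g + f)).
Proof.
rewrite (addrC h e) [a + g + _]addrACA (addrC b h) [h + b + _]addrACA (addrC h g).
by rewrite addrKA addrACA opprD.
Qed.

Section Main.
Variables (K : numFieldType) (n : nat) (l1 l2 : domwt n) (c1 c2 : K) (hc : c1 != c2)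
  (d1 : nat) (rho1 : 'M[K]_n -> 'M[K]_d1) (v1 : 'rV[K]_d1)
  (H1 : is_simple_hw l1 rho1 v1)
  (d2 : nat) (rho2 : 'M[K]_n -> 'M[K]_d2) (v2 : 'rV[K]_d2)
  (H2 : is_simple_hw l2 rho2 v2).

Local Notation D := (d1 * d2)%N.
Local Notation A := (tens_act rho1 rho2 c1 c2).
Local Notation w := (v1 *t v2 : 'rV[K]_D).

Definition P1 x : 'M[K]_D := rho1 x *t (1%:M : 'M[K]_d2).
Definition P2 x : 'M[K]_D := (1%:M : 'M[K]_d1) *t rho2 x.

Lemma Hs1 : is_sl_mod (mx_act rho1). Proof. by case: H1. Qed.
Lemma Hs2 : is_sl_mod (mx_act rho2). Proof. by case: H2. Qed.

Lemma AE x p : A x p = p.[c1] *: P1 x + p.[c2] *: P2 x.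
Proof. by []. Qed.

Lemma P1_lin c x y : in_sl x -> in_sl y -> P1 (c *: x + y) = c *: P1 x + P1 y.
Proof. by move=> hx hy; rewrite /P1 (rho_lin Hs1) // tensmxDl tensmxZl. Qed.
Lemma P2_lin c x y : in_sl x -> in_sl y -> P2 (c *: x + y) = c *: P2 x + P2 y.
Proof. by move=> hx hy; rewrite /P2 (rho_lin Hs2) // tensmxDr tensmxZr. Qed.

Lemma P12C x y : P1 x *m P2 y = P2 y *m P1 x.
Proof. by rewrite /P1 /P2 !tensmx_mul !mulmx1 !mul1mx. Qed.

Lemma P1_lie x y : in_sl x -> in_sl y ->
  P1 (lie x y) = P1 y *m P1 x - P1 x *m P1 y.
Proof.
by move=> hx hy; rewrite /P1 (rho_lie Hs1) // !tensmx_mul mulmx1 tensmxDl tensmxNl.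
Qed.
Lemma P2_lie x y : in_sl x -> in_sl y ->
  P2 (lie x y) = P2 y *m P2 x - P2 x *m P2 y.
Proof.
by move=> hx hy; rewrite /P2 (rho_lie Hs2) // !tensmx_mul mulmx1 tensmxDr tensmxNr.
Qed.

Lemma A_lin_x c x y p : in_sl x -> in_sl y -> A (c *: x + y) p = c *: A x p + A y p.
Proof.
move=> hx hy; rewrite !AE P1_lin // P2_lin // !scalerDr !scalerA.
rewrite [c * p.[c1]]mulrC [c * p.[c2]]mulrC addrACA //.
Qed.

Lemma A_lin_p c x p q : A x (c *: p + q) = c *: A x p + A x q.
Proof.
rewrite !AE !hornerD !hornerZ !scalerDl !scalerDr !scalerA addrACA //.
Qed.

Lemma A_lie x y p q : in_sl x -> in_sl y ->
  A (lie x y) (p * q) = A y q *m A x p - A x p *m A y q.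
Proof.
move=> hx hy; rewrite !AE P1_lie // P2_lie // !hornerM.
rewrite !mulmxDl !mulmxDr -!scalemxAl -!scalemxAr !scalerA.
rewrite -[P2 y *m P1 x]P12C -[P2 x *m P1 y]P12C.
rewrite !scalerBr.
set a := P1 y *m P1 x; set b := P1 x *m P1 y; set e := P2 y *m P2 x; set f := P2 x *m P2 y.
set g := P1 y *m P2 x; set h := P1 x *m P2 y.
rewrite [q.[c1] * p.[c1]]mulrC [q.[c2] * p.[c2]]mulrC [q.[c1] * p.[c2]]mulrC [q.[c2] * p.[c1]]mulrC.
set z1 := p.[c1] * q.[c1]; set z2 := p.[c2] * q.[c2].
set z3 := p.[c2] * q.[c1]; set z4 := p.[c1] * q.[c2].
exact: rearr.
Qed.


Definition bet (p : {poly K}) := (p.[c1] - p.[c2]) / (c1 - c2).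
Definition alp (p : {poly K}) := p.[c1] - bet p * c1.

Lemma c12 : c1 - c2 != 0. Proof. by rewrite subr_eq0. Qed.

Lemma A1E x : A x 1 = P1 x + P2 x.
Proof. by rewrite AE !hornerC !scale1r. Qed.
Lemma AXE x : A x 'X = c1 *: P1 x + c2 *: P2 x.
Proof. by rewrite AE !hornerX. Qed.

Lemma A_decomp x p : A x p = alp p *: A x 1 + bet p *: A x 'X.
Proof.
rewrite AE A1E AXE !scalerDr !scalerA addrACA -!scalerDl.
congr (_ *: _ + _ *: _); rewrite /alp /bet; first by rewrite subrK.
by field; apply: c12.
Qed.

Lemma P1_A x : P1 x = (c1 - c2)^-1 *: (A x 'X - c2 *: A x 1).
Proof.
rewrite A1E AXE [c2 *: (_ + _)]scalerDr opprD addrACA subrr addr0 -scalerBl scalerA.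
by rewrite mulVf ?scale1r // c12.
Qed.
Lemma P2_A x : P2 x = (c2 - c1)^-1 *: (A x 'X - c1 *: A x 1).
Proof.
rewrite A1E AXE [c1 *: (_ + _)]scalerDr opprD addrACA subrr add0r -scalerBl scalerA.
by rewrite mulVf ?scale1r // subr_eq0 eq_sym.
Qed.

Lemma wP1 x : w *m P1 x = (v1 *m rho1 x) *t v2.
Proof. by have := tensmx_mul v1 v2 (rho1 x) 1%:M; rewrite mulmx1. Qed.
Lemma wP2 x : w *m P2 x = v1 *t (v2 *m rho2 x).
Proof. by have := tensmx_mul v1 v2 1%:M (rho2 x); rewrite mulmx1. Qed.

Lemma w_nplus x p : in_nplus x -> w *m A x p = 0.
Proof.
case: H1 => _ _ _ h1 _; case: H2 => _ _ _ h2 _ hx.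
by rewrite AE mulmxDr -!scalemxAr wP1 wP2 h1 // h2 // tens0mx tensmx0 !scaler0 addr0.
Qed.

Lemma w_cartanP x : in_cartan x ->
  w *m P1 x = wt l1 x *: w /\ w *m P2 x = wt l2 x *: w.
Proof.
case: H1 => _ _ _ _ h1; case: H2 => _ _ _ _ h2 hx.
by rewrite wP1 wP2 h1 // h2 // tensmxZl tensmxZr.
Qed.

Lemma wt_addE (h : 'M[K]_n) : wt (wt_add l1 l2) h = wt l1 h + wt l2 h.
Proof.
by rewrite /wt /wt_add -big_split /=; apply: eq_bigr => k _; rewrite natrD mulrDl.
Qed.

Lemma w_cartan x p : in_cartan x ->
  w *m A x p = (p.[c1] * wt l1 x + p.[c2] * wt l2 x) *: w.
Proof.
move=> hx; have [e1 e2] := w_cartanP hx.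
by rewrite AE mulmxDr -!scalemxAr e1 e2 !scalerA scalerDl.
Qed.

Lemma w_cartan1 x : in_cartan x -> w *m A x 1 = wt (wt_add l1 l2) x *: w.
Proof. by move=> hx; rewrite w_cartan // !hornerC !mul1r wt_addE. Qed.

Local Notation W r := (filt A w r).
Local Notation B r := (filtm1 A w r).
Local Notation G r := (grpiece A w r).
Local Notation Pj r := (grproj A w r).

Lemma mono_W k u : mono A w k u -> (u <= W k)%MS.
Proof. by move=> h; apply: span_in; exists k. Qed.

Lemma W_mono r s : (r <= s)%N -> (W r <= W s)%MS.
Proof.
move=> rs; apply: span_le => u [k kr hk]; apply: span_in; exists k => //.
exact: leq_trans kr rs.
Qed.

Lemma w_W0 : (w <= W 0)%MS.
Proof. exact: mono_W (mono0 _ _). Qed.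

Lemma W_mulX r j x : in_sl x -> (W r *m A x 'X^j <= W (r + j))%MS.
Proof.
move=> hx; apply: span_map => u [k kr hk].
apply: submx_trans (W_mono (leq_add kr (leqnn j))).
exact: mono_W (monoS _ hx hk).
Qed.

Lemma W_mul1 r x : in_sl x -> (W r *m A x 1 <= W r)%MS.
Proof. by move=> hx; have := W_mulX r 0 hx; rewrite expr0 addn0. Qed.

Lemma W_mulp r x p : in_sl x -> (W r *m A x p <= W r.+1)%MS.
Proof.
move=> hx; rewrite A_decomp mulmxDr -!scalemxAr addmx_sub ?scalemx_sub //.
  exact: submx_trans (W_mul1 r hx) (W_mono (leqnSn r)).
by have := W_mulX r 1 hx; rewrite expr1 addn1.
Qed.

Lemma B0 : B 0 = 0. Proof. by []. Qed.
Lemma BS r : B r.+1 = W r. Proof. by []. Qed.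

Lemma B_W r : (B r <= W r)%MS.
Proof. by case: r => [|r]; rewrite ?sub0mx // BS W_mono. Qed.

Lemma G_W r : (G r <= W r)%MS.
Proof. exact: diffmxSl. Qed.

Lemma GB_cap r : (G r :&: B r)%MS = 0.
Proof. exact: capmx_diff. Qed.

Lemma GB_add r : (G r + B r :=: W r)%MS.
Proof.
move/capmx_idPr: (B_W r) => e.
apply: eqmx_trans _ (addsmx_diff_cap_eq (W r) (B r)).
exact: adds_eqmx (eqmx_refl _) (eqmx_sym e).
Qed.

Lemma Pj_sub r m (v : 'M_(m, D)) : (v *m Pj r <= G r)%MS.
Proof. exact: proj_mx_sub. Qed.

Lemma Pj_id r m (v : 'M_(m, D)) : (v <= G r)%MS -> v *m Pj r = v.
Proof. exact: proj_mx_id (GB_cap r). Qed.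
Lemma Pj_0 r m (v : 'M_(m, D)) : (v <= B r)%MS -> v *m Pj r = 0.
Proof. exact: proj_mx_0 (GB_cap r). Qed.
Lemma Pj_res r m (v : 'M_(m, D)) : (v <= W r)%MS -> (v - v *m Pj r <= B r)%MS.
Proof. by move=> h; apply: proj_mx_compl_sub; rewrite (GB_add r). Qed.

Lemma B_mulX r k x : in_sl x -> (B r *m A x 'X^k <= B (r + k))%MS.
Proof.
case: r => [|r] hx; first by rewrite mul0mx sub0mx.
by rewrite addSn BS; apply: W_mulX.
Qed.

Lemma B_mul1 r x : in_sl x -> (B r *m A x 1 <= B r)%MS.
Proof. by move=> hx; have := B_mulX r 0 hx; rewrite expr0 addn0. Qed.

Lemma absorb r k x (u : 'rV[K]_D) : in_sl x -> (u <= W r)%MS ->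
  u *m Pj r *m A x 'X^k *m Pj (r + k) = u *m A x 'X^k *m Pj (r + k).
Proof.
move=> hx hu; apply/eqP; rewrite -subr_eq0 -!mulmxBl; apply/eqP; apply: Pj_0.
rewrite -opprB mulNmx eqmx_opp.
exact: submx_trans (submxMr _ (Pj_res hu)) (B_mulX r k hx).
Qed.

Lemma W_G r (u : 'rV[K]_D) : (u <= G r)%MS -> (u <= W r)%MS.
Proof. by move=> h; apply: submx_trans h (G_W r). Qed.

Definition GW : lmodType K := nat -> 'rV[K]_D.

Definition nrm (g : GW) : GW := fun r => g r *m Pj r.
Definition bact x p (g : GW) : GW := gr_act A w x p (nrm g).

Lemma gr_actE x p (g : GW) s :
  gr_act A w x p g s = (\sum_(k < s.+1) p`_k *: (g (s - k)%N *m A x 'X^k)) *m Pj s.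
Proof. by rewrite /gr_act mulmx_suml; apply: eq_bigr => k _; rewrite -scalemxAl. Qed.

Lemma gr_act_G x p (g : GW) s : (gr_act A w x p g s <= G s)%MS.
Proof. by rewrite gr_actE; apply: Pj_sub. Qed.

Definition mon x a (g : GW) s : 'rV[K]_D :=
  if (a <= s)%N then g (s - a)%N *m A x 'X^a *m Pj s else 0.

Lemma gr_actX x a (g : GW) s : gr_act A w x 'X^a g s = mon x a g s.
Proof.
rewrite /gr_act /mon; case: (leqP a s) => h.
  rewrite (bigD1 (Ordinal (h : (a < s.+1)%N))) //= coefXn eqxx scale1r big1 ?addr0 //.
  move=> k hk; rewrite coefXn; case: eqP => [ek|]; last by rewrite scale0r.
  by move: hk; rewrite -(inj_eq val_inj) /= ek eqxx.
apply: big1 => k _; rewrite coefXn; case: eqP => [ek|]; last by rewrite scale0r.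
by move: (ltn_ord k); rewrite ek ltnS leqNgt h.
Qed.

Lemma gr_act_lin x c p q (g : GW) s :
  gr_act A w x (c *: p + q) g s = c *: gr_act A w x p g s + gr_act A w x q g s.
Proof.
rewrite !gr_actE scalemxAl -mulmxDl scaler_sumr -big_split /=; congr (_ *m _).
by apply: eq_bigr => k _; rewrite coefD coefZ scalerDl scalerA.
Qed.

Lemma gr_act0 x (g : GW) s : gr_act A w x 0 g s = 0.
Proof.
have := gr_act_lin x 1 0 0 g s; rewrite scaler0 addr0 scale1r => h.
by apply: (addrI (gr_act A w x 0 g s)); rewrite addr0 -h.
Qed.

Lemma gr_actZ x c p (g : GW) s : gr_act A w x (c *: p) g s = c *: gr_act A w x p g s.
Proof. by have := gr_act_lin x c p 0 g s; rewrite addr0 gr_act0 addr0. Qed.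

Lemma gr_act_sum x I (r : seq I) (F : I -> {poly K}) (g : GW) s :
  gr_act A w x (\sum_(i <- r) F i) g s = \sum_(i <- r) gr_act A w x (F i) g s.
Proof.
elim: r => [|i r IH]; first by rewrite !big_nil gr_act0.
rewrite !big_cons -IH.
by have := gr_act_lin x 1 (F i) (\sum_(j <- r) F j) g s; rewrite !scale1r.
Qed.

Lemma poly_expand (p : {poly K}) : p = \sum_(a < size p) p`_a *: 'X^a.
Proof. by rewrite -{1}(coefK p) poly_def. Qed.

Lemma gr_act_poly x p (g : GW) s :
  gr_act A w x p g s = \sum_(a < size p) p`_a *: mon x a g s.
Proof.
rewrite {1}(poly_expand p) gr_act_sum; apply: eq_bigr => a _.
by rewrite gr_actZ gr_actX.
Qed.

Lemma funextGW (f g : GW) : (forall s, f s = g s) -> f = g.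
Proof. by move=> h; apply: funext. Qed.

Lemma nrm_id (g : GW) : (forall s, (g s <= G s)%MS) -> nrm g = g.
Proof. by move=> h; apply: funextGW => s; rewrite /nrm Pj_id. Qed.

Lemma nrm_G (g : GW) s : (nrm g s <= G s)%MS.
Proof. exact: Pj_sub. Qed.

Lemma nrm_gr x p (g : GW) : nrm (gr_act A w x p g) = gr_act A w x p g.
Proof. by apply: nrm_id => s; apply: gr_act_G. Qed.

Lemma gr_act_lin_x c x y p (g : GW) s : in_sl x -> in_sl y ->
  gr_act A w (c *: x + y) p g s = c *: gr_act A w x p g s + gr_act A w y p g s.
Proof.
move=> hx hy; rewrite !gr_actE scalemxAl -mulmxDl scaler_sumr -big_split /=.
congr (_ *m _); apply: eq_bigr => k _.
by rewrite A_lin_x // mulmxDr -scalemxAr !scalerDr !scalerA mulrC.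
Qed.

Lemma gr_act_lin_g c x p (g1 g2 : GW) s :
  gr_act A w x p (fun r => c *: g1 r + g2 r) s = c *: gr_act A w x p g1 s + gr_act A w x p g2 s.
Proof.
rewrite !gr_actE scalemxAl -mulmxDl scaler_sumr -big_split /=.
congr (_ *m _); apply: eq_bigr => k _.
by rewrite mulmxDl -scalemxAl !scalerDr !scalerA mulrC.
Qed.

Lemma mon_sum x a I (l : seq I) (c : I -> K) (F : I -> GW) s :
  mon x a (fun r => \sum_(i <- l) c i *: F i r) s = \sum_(i <- l) c i *: mon x a (F i) s.
Proof.
rewrite /mon; case: ifP => _; last by rewrite big1 // => i _; rewrite scaler0.
by rewrite !mulmx_suml; apply: eq_bigr => i _; rewrite -!scalemxAl.
Qed.

Lemma absorb' r k s x (u : 'rV[K]_D) : (r + k)%N = s -> in_sl x -> (u <= W r)%MS ->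
  u *m Pj r *m A x 'X^k *m Pj s = u *m A x 'X^k *m Pj s.
Proof. by move=> <-; apply: absorb. Qed.

Lemma mon_mon x y a b (h : GW) s : in_sl x -> in_sl y -> (forall r, (h r <= G r)%MS) ->
  mon x a (mon y b h) s =
  if (a + b <= s)%N then h (s - (a + b))%N *m A y 'X^b *m A x 'X^a *m Pj s else 0.
Proof.
move=> hx hy hh; rewrite /mon.
case: (leqP a s) => has; last first.
  by case: ifP => // hab; move: (leq_trans (leq_addr b a) hab); rewrite leqNgt has.
rewrite -(leq_subRL _ has); case: ifP => hb; last by rewrite !mul0mx.
rewrite subnDA; apply: absorb' => //; first by rewrite subnK.
apply: submx_trans (submxMr _ (W_G (hh _))) _.
by have := W_mulX (s - a - b) b hy; rewrite subnK.
Qed.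

Lemma bracket_mon x y a b (h : GW) s : in_sl x -> in_sl y -> (forall r, (h r <= G r)%MS) ->
  mon (lie x y) (a + b) h s = mon x a (mon y b h) s - mon y b (mon x a h) s.
Proof.
move=> hx hy hh; rewrite !mon_mon // [(b + a)%N]addnC /mon.
case: ifP => _; last by rewrite subrr.
by rewrite exprD A_lie // mulmxBr mulmxBl !mulmxA.
Qed.

Lemma polyM_expand (p q : {poly K}) :
  p * q = \sum_(a < size p) \sum_(b < size q) (p`_a * q`_b) *: 'X^(a + b).
Proof.
rewrite {1}(poly_expand p) {1}(poly_expand q) mulr_suml; apply: eq_bigr => a _.
rewrite mulr_sumr; apply: eq_bigr => b _.
by rewrite -scalerAl -scalerAr scalerA exprD.
Qed.

Lemma bact_bracket x y p q (g : GW) : in_sl x -> in_sl y ->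
  bact (lie x y) (p * q) g = bact x p (bact y q g) - bact y q (bact x p g).
Proof.
move=> hx hy; apply: funextGW => s.
rewrite /bact !nrm_gr.
set h := nrm g; have hh : forall r, (h r <= G r)%MS by move=> r; apply: nrm_G.
have e1 : gr_act A w y q h = fun r => \sum_(b < size q) q`_b *: mon y b h r.
  by apply: funext => r; rewrite gr_act_poly.
have e2 : gr_act A w x p h = fun r => \sum_(a < size p) p`_a *: mon x a h r.
  by apply: funext => r; rewrite gr_act_poly.
change (gr_act A w (lie x y) (p * q) h s =
  gr_act A w x p (gr_act A w y q h) s - gr_act A w y q (gr_act A w x p h) s).
rewrite (gr_act_poly x p) (gr_act_poly y q) e1 e2.
rewrite polyM_expand gr_act_sum.
transitivity (\sum_(a < size p) \sum_(b < size q)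
  (p`_a * q`_b) *: (mon x a (mon y b h) s - mon y b (mon x a h) s)).
  apply: eq_bigr => a _; rewrite gr_act_sum; apply: eq_bigr => b _.
  by rewrite gr_actZ gr_actX bracket_mon.
have m1 : forall a, mon x a (fun r => \sum_(b < size q) q`_b *: mon y b h r) s =
    \sum_(b < size q) q`_b *: mon x a (mon y b h) s.
  by move=> a; exact: (mon_sum x a (index_enum 'I_(size q)) (fun b : 'I_(size q) => q`_b) (fun b : 'I_(size q) => mon y b h)).
have m2 : forall b, mon y b (fun r => \sum_(a < size p) p`_a *: mon x a h r) s =
    \sum_(a < size p) p`_a *: mon y b (mon x a h) s.
  by move=> b; exact: (mon_sum y b (index_enum 'I_(size p)) (fun a : 'I_(size p) => p`_a) (fun a : 'I_(size p) => mon x a h)).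
under [X in _ = X - _]eq_bigr => a _ do rewrite m1 scaler_sumr.
under [X in _ = _ - X]eq_bigr => b _ do rewrite m2 scaler_sumr.
rewrite [X in _ = _ - X]exchange_big /= -sumrB; apply: eq_bigr => a _.
rewrite -sumrB; apply: eq_bigr => b _.
by rewrite !scalerA scalerBr [q`_b * _]mulrC.
Qed.

Lemma bact_cur : is_cur_mod bact.
Proof.
split.
- move=> x y p c v hx hy; apply: funextGW => s.
  by rewrite /bact gr_act_lin_x.
- move=> x p q c v hx; apply: funextGW => s.
  by rewrite /bact gr_act_lin.
- move=> x p c u v hx; apply: funextGW => s; rewrite /bact.
  transitivity (gr_act A w x p (fun r => c *: nrm u r + nrm v r) s).
    apply: (f_equal (fun F => gr_act A w x p F s)).
    by apply: funextGW => r; rewrite /nrm mulmxDl scalemxAl.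
  by rewrite gr_act_lin_g.
- by move=> x y p q v hx hy; apply: bact_bracket.
Qed.

Definition g0 : GW := fun r => if r == 0%N then w else 0.

Lemma W0_G0 : (W 0 <= G 0)%MS.
Proof.
have := GB_add 0; move/eqmxP => /andP [_ h].
by apply: submx_trans h _; rewrite B0 addsmx0.
Qed.

Lemma g0_G r : (g0 r <= G r)%MS.
Proof.
rewrite /g0; case: eqP => [->|_]; last exact: sub0mx.
exact: submx_trans w_W0 W0_G0.
Qed.

Lemma nrm_g0 : nrm g0 = g0.
Proof. exact: nrm_id g0_G. Qed.

Lemma g0_act x p s : gr_act A w x p g0 s = p`_s *: (w *m A x 'X^s *m Pj s).
Proof.
rewrite gr_actE big_ord_recr /= big1 ?add0r ?subnn ?scalemxAl //.
move=> k _; rewrite /g0 (_ : (s - k == 0)%N = false) ?mul0mx ?scaler0 //.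
by rewrite subn_eq0 leqNgt ltn_ord.
Qed.

Lemma w_B s : (0 < s)%N -> (w <= B s)%MS.
Proof.
by case: s => [//|s] _; rewrite BS; apply: submx_trans w_W0 (W_mono (leq0n s)).
Qed.

Lemma wA_W1 x p : in_sl x -> (w *m A x p <= W 1)%MS.
Proof. by move=> hx; apply: submx_trans (submxMr _ w_W0) (W_mulp 0 p hx). Qed.

Lemma act1 x (g : GW) s : gr_act A w x 1 g s = g s *m A x 1 *m Pj s.
Proof. by have := gr_actX x 0 g s; rewrite expr0 /mon leq0n subn0 => ->. Qed.

Lemma wpow1_W0 f k : in_sl f -> (w *m (A f 1) ^+ k <= W 0)%MS.
Proof.
move=> hf; elim: k => [|k IH]; first by rewrite expr0 mulmx1 w_W0.
by rewrite mxexpSr mulmxA; apply: submx_trans (submxMr _ IH) (W_mul1 0 hf).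
Qed.

Lemma wpowX_W f k : in_sl f -> (w *m (A f 'X) ^+ k <= W k)%MS.
Proof.
move=> hf; elim: k => [|k IH]; first by rewrite expr0 mulmx1 w_W0.
rewrite mxexpSr mulmxA; apply: submx_trans (submxMr _ IH) _.
by have := W_mulX k 1 hf; rewrite expr1 addn1.
Qed.

Lemma iter_f1 f k : in_sl f ->
  iter k (bact f 1) g0 = fun s => if s == 0%N then w *m (A f 1) ^+ k else 0.
Proof.
move=> hf; elim: k => [|k IH].
  by apply: funextGW => s; rewrite /= /g0 expr0 mulmx1.
rewrite iterS IH /bact nrm_id; last first.
  move=> s; case: eqP => [->|_]; last exact: sub0mx.
  exact: submx_trans (wpow1_W0 k hf) W0_G0.
apply: funextGW => s; rewrite act1; case: eqP => [->|_]; last by rewrite !mul0mx.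
rewrite -(mulmxA w) -mxexpSr Pj_id //.
exact: submx_trans (wpow1_W0 k.+1 hf) W0_G0.
Qed.

Lemma iter_fX f k : in_sl f ->
  iter k (bact f 'X) g0 = fun s => if s == k then w *m (A f 'X) ^+ k *m Pj k else 0.
Proof.
move=> hf; elim: k => [|k IH].
  apply: funextGW => s; rewrite /= /g0 expr0 mulmx1; case: eqP => // _.
  by rewrite Pj_id // (submx_trans w_W0 W0_G0).
rewrite iterS IH /bact nrm_id; last first.
  by move=> s; case: eqP => [->|_]; [apply: Pj_sub | apply: sub0mx].
apply: funextGW => s; have := gr_actX f 1 (fun s0 => if s0 == k then w *m A f 'X ^+ k *m Pj k else 0) s.
rewrite expr1 => ->; rewrite /mon.
case: s => [|s] //=; rewrite subn1 /= eqSS.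
case: eqP => [->|_]; last by rewrite !mul0mx.
rewrite (absorb' (r := k) (k := 1) (s := k.+1)) ?addn1 //; last exact: wpowX_W.
by rewrite expr1 -(mulmxA w) -mxexpSr.
Qed.

Lemma f_sl (i j : 'I_n) : (i < j)%N -> in_sl (f_root K i j : 'M[K]_n).
Proof. by move=> ij; apply: in_sl_delta; rewrite neq_ltn ij orbT. Qed.

Lemma kill1 (i j : 'I_n) : (i < j)%N ->
  iter (wt_coroot (wt_add l1 l2) i j).+1 (bact (f_root K i j) 1) g0 = 0.
Proof.
move=> ij; rewrite iter_f1; last exact: f_sl.
apply: funextGW => s.
case: eqP => // _.
have ne : i != j by rewrite neq_ltn ij.
apply: (rep_kill (rho := fun x => A x 1)) => //.
- by move=> c x y hx hy; apply: A_lin_x.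
- by move=> x y hx hy; rewrite -{1}[1](mulr1 (1 : {poly K})) A_lie.
- by apply: w_nplus; apply: nplus_delta.
- rewrite w_cartan1; last exact: cartan_h.
  by congr (_ *: _); apply: wt_h.
Qed.

Lemma wP1pow x N : w *m P1 x ^+ N = (v1 *m rho1 x ^+ N) *t v2.
Proof.
elim: N => [|N IH]; first by rewrite !expr0 !mulmx1.
rewrite mxexpSr mulmxA IH mxexpSr mulmxA.
by have := tensmx_mul (v1 *m rho1 x ^+ N) v2 (rho1 x) 1%:M; rewrite mulmx1.
Qed.

Lemma wP2pow x N : w *m P2 x ^+ N = v1 *t (v2 *m rho2 x ^+ N).
Proof.
elim: N => [|N IH]; first by rewrite !expr0 !mulmx1.
rewrite mxexpSr mulmxA IH mxexpSr mulmxA.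
by have := tensmx_mul v1 (v2 *m rho2 x ^+ N) 1%:M (rho2 x); rewrite mulmx1.
Qed.

Lemma expand_lem (Pm Q : 'M[K]_D) (al be : K) :
  (forall r, (W r *m Pm <= W r.+1)%MS) -> (forall r, (W r *m Q <= W r)%MS) ->
  forall N, (w *m (al *: Pm + be *: Q) ^+ N - al ^+ N *: (w *m Pm ^+ N) <= B N)%MS.
Proof.
move=> hP hQ.
have hB : forall N, (B N *m (al *: Pm + be *: Q) <= B N.+1)%MS.
  case=> [|N]; first by rewrite mul0mx sub0mx.
  rewrite !BS mulmxDr -!scalemxAr addmx_sub ?scalemx_sub //.
  exact: submx_trans (hQ _) (W_mono (leqnSn _)).
have hwP : forall N, (w *m Pm ^+ N <= W N)%MS.
  elim=> [|N IH]; first by rewrite expr0 mulmx1 w_W0.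
  by rewrite mxexpSr mulmxA; apply: submx_trans (submxMr _ IH) (hP _).
elim=> [|N IH]; first by rewrite !expr0 mulmx1 scale1r subrr sub0mx.
set X := al *: Pm + be *: Q.
have -> : w *m X ^+ N.+1 - al ^+ N.+1 *: (w *m Pm ^+ N.+1) =
  (w *m X ^+ N - al ^+ N *: (w *m Pm ^+ N)) *m X + (be * al ^+ N) *: (w *m Pm ^+ N *m Q).
  rewrite mulmxBl !mxexpSr !mulmxA -scalemxAl /X mulmxDr -!scalemxAr.
  rewrite [X in al ^+ N *: X]mulmxDr -!scalemxAr scalerDr !scalerA -exprSr [al ^+ N * be]mulrC.
  by rewrite opprD addrA subrK.
rewrite addmx_sub ?scalemx_sub //; first exact: submx_trans (submxMr _ IH) (hB N).
by rewrite BS; apply: submx_trans (submxMr _ (hwP N)) (hQ N).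
Qed.

Lemma W_P1 r x : in_sl x -> (W r *m P1 x <= W r.+1)%MS.
Proof.
move=> hx; rewrite P1_A -scalemxAr scalemx_sub // mulmxBr addmx_sub // ?eqmx_opp.
  by have := W_mulX r 1 hx; rewrite expr1 addn1.
rewrite -scalemxAr scalemx_sub //.
exact: submx_trans (W_mul1 r hx) (W_mono (leqnSn r)).
Qed.

Lemma W_P2 r x : in_sl x -> (W r *m P2 x <= W r.+1)%MS.
Proof.
move=> hx; rewrite P2_A -scalemxAr scalemx_sub // mulmxBr addmx_sub // ?eqmx_opp.
  by have := W_mulX r 1 hx; rewrite expr1 addn1.
rewrite -scalemxAr scalemx_sub //.
exact: submx_trans (W_mul1 r hx) (W_mono (leqnSn r)).
Qed.

Lemma hw_kill d (rho : 'M[K]_n -> 'M[K]_d) (v : 'rV[K]_d) (l : domwt n) (i j : 'I_n) :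
  is_simple_hw l rho v -> (i < j)%N -> v *m rho (f_root K i j) ^+ (wt_coroot l i j).+1 = 0.
Proof.
case=> Hs _ _ h4 h5 ij.
have ne : i != j by rewrite neq_ltn ij.
apply: (rep_kill (rho := rho)) => //.
- by move=> c x y hx hy; apply: (rho_lin Hs).
- by move=> x y hx hy; apply: (rho_lie Hs).
- by apply: h4; apply: nplus_delta.
- rewrite h5; last exact: cartan_h.
  by congr (_ *: _); apply: wt_h.
Qed.

Lemma killX (i j : 'I_n) : (i < j)%N ->
  iter (minn (wt_coroot l1 i j) (wt_coroot l2 i j)).+1 (bact (f_root K i j) 'X) g0 = 0.
Proof.
move=> ij; have hf := f_sl ij.
rewrite iter_fX; last exact: hf.
apply: funextGW => s; case: eqP => // _; apply: Pj_0; rewrite BS.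
set f := f_root K i j.
case: (leqP (wt_coroot l1 i j) (wt_coroot l2 i j)) => hab.

  have := expand_lem (c1 - c2) c2 (fun r => W_P1 r hf) (fun r => W_mul1 r hf) (wt_coroot l1 i j).+1.
  rewrite wP1pow hw_kill // tens0mx scaler0 subr0 BS.
  suff -> : A f 'X = (c1 - c2) *: P1 f + c2 *: A f 1 by [].
  by rewrite AXE A1E scalerDr addrA -scalerDl subrK.

have := expand_lem (c2 - c1) c1 (fun r => W_P2 r hf) (fun r => W_mul1 r hf) (wt_coroot l2 i j).+1.
rewrite wP2pow hw_kill // tensmx0 scaler0 subr0 BS.
suff -> : A f 'X = (c2 - c1) *: P2 f + c1 *: A f 1 by [].
by rewrite AXE A1E scalerDr addrCA -scalerDl subrK addrC.
Qed.

Lemma Frel_g0 : F_rel l1 l2 bact g0.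
Proof.
split.
- move=> x p hx; apply: funextGW => s.
  by rewrite /bact nrm_g0 g0_act w_nplus // !mul0mx scaler0.
- move=> h p hh hp0; apply: funextGW => s.
  rewrite /bact nrm_g0 g0_act; case: s => [|s].
    by rewrite -horner_coef0 hp0 scale0r.
  rewrite w_cartan // -scalemxAl Pj_0 ?scaler0 //.
  exact: w_B.
- move=> x p hx hp0 hp1; apply: funextGW => s.
  rewrite /bact nrm_g0 g0_act; case: s => [|[|s]].
  + by rewrite hp0 scale0r.
  + by rewrite hp1 scale0r.
  rewrite Pj_0 ?scaler0 // BS.
  apply: submx_trans (wA_W1 _ (in_sl_nminus hx)) (W_mono _); by [].
- move=> h hh; apply: funextGW => s.
  rewrite /bact nrm_g0 g0_act coef1; case: s => [|s] /=.
    rewrite expr0 scale1r w_cartan1 // -scalemxAl Pj_id //.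
    exact: submx_trans w_W0 W0_G0.
  rewrite scale0r; change (0 = wt (wt_add l1 l2) h *: g0 s.+1).
  by rewrite /g0 /= scaler0.
- split; [exact: kill1 | exact: killX].
Qed.

Lemma W_stab_mono r : (W r.+1 <= W r)%MS -> forall k u, mono A w k u -> (u <= W r)%MS.
Proof.
move=> hr k u; elim => [|k' j x v hx hm IH].
  exact: submx_trans w_W0 (W_mono (leq0n r)).
rewrite A_decomp mulmxDr -!scalemxAr addmx_sub ?scalemx_sub //.
  exact: submx_trans (submxMr _ IH) (W_mul1 r hx).
apply: submx_trans hr; apply: submx_trans (submxMr _ IH) _.
by have := W_mulX r 1 hx; rewrite expr1 addn1.
Qed.

Lemma W_all r : (W r.+1 <= W r)%MS -> forall s, (W s <= W r)%MS.
Proof. by move=> hr s; apply: span_le => u [k _ hk]; apply: W_stab_mono hk. Qed.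

Lemma exists_stab : exists r, (W r.+1 <= W r)%MS.
Proof.
apply: contrapT => hn.
have hlt : forall r, (\rank (W r) < \rank (W r.+1))%N.
  move=> r; have := mxrank_leqif_sup (W_mono (leqnSn r)).
  move/leqifP; case: ifP => // h _; by exfalso; apply: hn; exists r.
have hge : forall r, (r <= \rank (W r))%N.
  by elim=> [//|r IH]; apply: leq_ltn_trans IH (hlt r).
by have := leq_trans (hge D.+1) (rank_leq_col _); rewrite ltnn.
Qed.

Lemma G_vanish r s : (W r.+1 <= W r)%MS -> (r < s)%N -> (G s :=: (0 : 'M[K]_D))%MS.
Proof.
move=> hr rs; apply/eqmxP; rewrite sub0mx andbT -(GB_cap s) sub_capmx submx_refl /=.
case: s rs => [//|s] rs; rewrite BS.
exact: (submx_trans (G_W s.+1) (submx_trans (W_all hr s.+1) (W_mono (rs : (r <= s)%N)))).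
Qed.

Definition delta k (v : 'rV[K]_D) : GW := fun s => if s == k then v else 0.

Lemma sumGW_apply I (l : seq I) (F : I -> GW) s :
  (\sum_(i <- l) F i) s = \sum_(i <- l) F i s.
Proof. by elim: l => [|i l IH]; rewrite ?big_nil ?big_cons //= -IH. Qed.

Lemma scaleGW_apply c (f : GW) s : (c *: f) s = c *: f s.
Proof. by []. Qed.
Lemma addGW_apply (f g : GW) s : (f + g) s = f s + g s.
Proof. by []. Qed.

Lemma W_B k r : (k < r)%N -> (W k <= B r)%MS.
Proof. by case: r => [//|r] kr; rewrite BS; apply: W_mono. Qed.

Section Surj.
Variable Img : GW -> Prop.
Hypotheses (Img0 : Img g0)
  (ImgL : forall c g g', Img g -> Img g' -> Img (c *: g + g'))
  (ImgA : forall x p g, in_sl x -> Img g -> Img (gr_act A w x p g)).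

Lemma Img_zero : Img 0.
Proof. by have := ImgL (-1) Img0 Img0; rewrite scaleN1r addNr. Qed.

Lemma Img_sum I (l : seq I) (c : I -> K) (F : I -> GW) :
  (forall i, Img (F i)) -> Img (\sum_(i <- l) c i *: F i).
Proof.
move=> h; elim: l => [|i l IH]; first by rewrite big_nil; apply: Img_zero.
by rewrite big_cons; apply: ImgL.
Qed.

Lemma Img_mono k u : mono A w k u -> Img (delta k (u *m Pj k)).
Proof.
elim => [|k' j x v hx hm IH].
  have -> : delta 0 (w *m Pj 0) = g0; last exact: Img0.
  apply: funextGW => s; rewrite /delta /g0; case: eqP => // _.
  by rewrite Pj_id // (submx_trans w_W0 W0_G0).
have -> : delta (k' + j) (v *m A x 'X^j *m Pj (k' + j)) = gr_act A w x 'X^j (delta k' (v *m Pj k')).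
  apply: funextGW => s; rewrite gr_actX /mon /delta.
  case: (leqP j s) => hjs.
    have -> : ((s - j)%N == k') = (s == k' + j) by rewrite -(eqn_add2r j) subnK.
    case: eqP => [->|_]; last by rewrite !mul0mx.
    by rewrite absorb' //; apply: mono_W.
  case: eqP => // e; move: hjs; rewrite e ltnNge leq_addl.
  by [].
exact: ImgA.
Qed.

Lemma Img_delta r v : (v <= G r)%MS -> Img (delta r v).
Proof.
move=> hv; have /span_ofP [s [Ps vs]] := W_G hv.
case/submxP: vs => a ea.
have -> : delta r v = \sum_(i < size s) a 0 i *: delta r (s`_i *m Pj r).
  apply: funextGW => t; rewrite sumGW_apply.
  under eq_bigr => i _ do rewrite scaleGW_apply.
  rewrite /delta; case: eqP => _; last first.
    by rewrite big1 // => i _; rewrite scaler0.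
  rewrite -(Pj_id hv) ea -mulmxA mulmx_sum_row; apply: eq_bigr => i _.
  by rewrite row_mul rowK.
apply: Img_sum => i.
have := Ps (s`_i) (mem_nth 0 (ltn_ord i)) => -[k kr hk].
case: (ltnP k r) => [{}kr|hrk]; last first.
  have e : k = r by apply/eqP; rewrite eqn_leq kr hrk.
  by rewrite -e; apply: Img_mono.
have -> : delta r (s`_i *m Pj r) = 0; last exact: Img_zero.
apply: funextGW => t; rewrite /delta; case: eqP => // _; rewrite Pj_0 //.
exact: submx_trans (mono_W hk) (W_B kr).
Qed.

Lemma Img_all g : in_gr A w g -> Img g.
Proof.
move=> hg; have [r hr] := exists_stab.
have -> : g = \sum_(t < r.+1) 1 *: delta t (g t).
  apply: funextGW => s; rewrite sumGW_apply.
  case: (leqP s r) => hs.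
    rewrite (bigD1 (Ordinal (hs : (s < r.+1)%N))) //= big1 ?addr0.
      by rewrite scale1r /delta eqxx.
    move=> t ht; rewrite scale1r /delta; case: eqP => // e.
    by move: ht; rewrite -(inj_eq val_inj) /= e eqxx.
  rewrite big1; last first.
    move=> t _; rewrite scale1r /delta; case: eqP => // e.
    by move: (ltn_ord t); rewrite -e ltnS leqNgt hs.
  by apply/eqP; rewrite -submx0 (submx_trans (hg s)) // (G_vanish hr hs).
apply: Img_sum => t; apply: Img_delta; exact: hg.
Qed.
End Surj.

Lemma part1 (VF : lmodType K) (aF : 'M[K]_n -> {poly K} -> VF -> VF) (one : VF) :
  is_F l1 l2 aF one ->
  exists phi : VF -> nat -> 'rV[K]_D,
    [/\ forall u, in_gr A w (phi u),
        forall c u u' r, phi (c *: u + u') r = c *: phi u r + phi u' r,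
        forall x p u r, in_sl x -> phi (aF x p u) r = gr_act A w x p (phi u) r &
        forall g, in_gr A w g -> exists u, forall r, phi u r = g r].
Proof.
case=> Hcur Hrel Hgen Huniv.
have [phi0 [hlin hone hact]] := Huniv GW bact g0 bact_cur Frel_g0.
have hL : forall c u u', nrm (phi0 (c *: u + u')) = c *: nrm (phi0 u) + nrm (phi0 u').
  move=> c u u'; apply: funextGW => r.
  by rewrite hlin /nrm !addGW_apply !scaleGW_apply mulmxDl -scalemxAl.
have hA : forall x p u, in_sl x -> nrm (phi0 (aF x p u)) = gr_act A w x p (nrm (phi0 u)).
  by move=> x p u hx; rewrite hact // /bact nrm_gr.
exists (fun u => nrm (phi0 u)); split.
- by move=> u r; apply: nrm_G.
- by move=> c u u' r; rewrite hL.
- by move=> x p u r hx; rewrite hA.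
move=> g hg.
have := Img_all (Img := fun g => exists u, nrm (phi0 u) = g) _ _ _ hg.
case=> //.
- by exists one; rewrite hone nrm_g0.
- by move=> c g1 g2 [u1 <-] [u2 <-]; exists (c *: u1 + u2); rewrite hL.
- by move=> x p g1 hx [u1 <-]; exists (aF x p u1); rewrite hA.
by move=> u <-; exists u.
Qed.

Lemma tens_suml (m p q : nat) I (l : seq I) (F : I -> 'M[K]_(m, p)) (v : 'M[K]_(1, q)) :
  (\sum_(i <- l) F i) *t v = \sum_(i <- l) (F i *t v).
Proof.
by elim: l => [|i l IH]; rewrite ?big_nil ?tens0mx // !big_cons tensmxDl IH.
Qed.
Lemma tens_sumr (p q m : nat) I (l : seq I) (u : 'M[K]_(1, p)) (F : I -> 'M[K]_(m, q)) :
  u *t (\sum_(i <- l) F i) = \sum_(i <- l) (u *t F i).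
Proof.
by elim: l => [|i l IH]; rewrite ?big_nil ?tensmx0 // !big_cons tensmxDr IH.
Qed.

Definition T1 : 'M[K]_(d1, D) := \matrix_(a < d1) ((delta_mx 0 a : 'rV[K]_d1) *t v2).
Lemma T1E (u : 'rV[K]_d1) : u *m T1 = u *t v2.
Proof.
rewrite mulmx_sum_row {2}(row_sum_delta u) tens_suml; apply: eq_bigr => a _.
by rewrite rowK tensmxZl.
Qed.

Definition T2 (u1 : 'rV[K]_d1) : 'M[K]_(d2, D) :=
  \matrix_(b < d2) (u1 *t (delta_mx 0 b : 'rV[K]_d2)).
Lemma T2E u1 (u : 'rV[K]_d2) : u *m T2 u1 = u1 *t u.
Proof.
rewrite mulmx_sum_row {2}(row_sum_delta u) tens_sumr; apply: eq_bigr => b _.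
by rewrite rowK tensmxZr.
Qed.

Lemma tensP1 (u : 'rV[K]_d1) (v : 'rV[K]_d2) x : (u *t v) *m P1 x = (u *m rho1 x) *t v.
Proof. by have := tensmx_mul u v (rho1 x) 1%:M; rewrite mulmx1. Qed.
Lemma tensP2 (u : 'rV[K]_d1) (v : 'rV[K]_d2) x : (u *t v) *m P2 x = u *t (v *m rho2 x).
Proof. by have := tensmx_mul u v 1%:M (rho2 x); rewrite mulmx1. Qed.

Lemma delta_tens (a : 'I_d1) (b : 'I_d2) :
  (delta_mx 0 (mxtens_index (a, b)) : 'rV[K]_D) = (delta_mx 0 a : 'rV[K]_d1) *t (delta_mx 0 b : 'rV[K]_d2).
Proof.
apply/matrixP => i j; case: (mxtens_indexP j) => c e.
rewrite !mxE !mxtens_indexK /=.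
have o1 : forall x : 'I_1, (x == 0) = true by move=> x; rewrite (ord1 x).
rewrite !o1 /= (inj_eq (can_inj (@mxtens_indexK _ _))) xpair_eqE.
by case: (c == a); case: (e == b); rewrite ?mulr1 ?mulr0.
Qed.

Lemma cyclic r : (W r.+1 <= W r)%MS -> (1%:M <= W r)%MS.
Proof.
move=> hr.
have clP1 : forall x, in_sl x -> (W r *m P1 x <= W r)%MS.
  by move=> x hx; apply: submx_trans (W_P1 r hx) (W_all hr _).
have clP2 : forall x, in_sl x -> (W r *m P2 x <= W r)%MS.
  by move=> x hx; apply: submx_trans (W_P2 r hx) (W_all hr _).
have wW : (w <= W r)%MS by apply: submx_trans w_W0 (W_mono (leq0n r)).
have step1 : forall u1 : 'rV[K]_d1, (u1 *t v2 <= W r)%MS.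
  pose U1 := kermx (T1 *m cokermx (W r)).
  have memU1 : forall u : 'rV[K]_d1, (u <= U1)%MS = (u *t v2 <= W r)%MS.
    by move=> u; rewrite sub_kermx mulmxA T1E submxE.
  have inv : forall x, in_sl x -> (U1 *m rho1 x <= U1)%MS.
    move=> x hx; apply/row_subP => a; rewrite row_mul memU1 -tensP1.
    apply: submx_trans (submxMr _ _) (clP1 x hx).
    by rewrite -memU1 row_sub.
  case: H1 => _ irr hv1 _ _.
  case: (irr U1 inv) => [h0|hfull] u1.
    exfalso; move: hv1; rewrite -submx0 => /negP; apply.
    apply: submx_trans (_ : (v1 <= U1)%MS) _; first by rewrite memU1.
    by case/andP: h0.
  by rewrite -memU1 (submx_trans (submx1 _) hfull).
have step2 : forall (u1 : 'rV[K]_d1) (u2 : 'rV[K]_d2), (u1 *t u2 <= W r)%MS.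
  move=> u1.
  pose U2 := kermx (T2 u1 *m cokermx (W r)).
  have memU2 : forall u : 'rV[K]_d2, (u <= U2)%MS = (u1 *t u <= W r)%MS.
    by move=> u; rewrite sub_kermx mulmxA T2E submxE.
  have inv : forall x, in_sl x -> (U2 *m rho2 x <= U2)%MS.
    move=> x hx; apply/row_subP => a; rewrite row_mul memU2 -tensP2.
    apply: submx_trans (submxMr _ _) (clP2 x hx).
    by rewrite -memU2 row_sub.
  case: H2 => _ irr hv2 _ _.
  case: (irr U2 inv) => [h0|hfull] u2.
    exfalso; move: hv2; rewrite -submx0 => /negP; apply.
    apply: submx_trans (_ : (v2 <= U2)%MS) _; first by rewrite memU2.
    by case/andP: h0.
  by rewrite -memU2 (submx_trans (submx1 _) hfull).
apply/row_subP => j; rewrite row1; case: (mxtens_indexP j) => a b.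
by rewrite delta_tens.
Qed.

Section P2.
Variables (dt : nat) (rhot : 'M[K]_n -> 'M[K]_dt) (k : nat) (X : 'I_k -> 'M[K]_(D, dt)).
Hypothesis hX : forall i x, in_sl x -> A x 1 *m X i = X i *m rhot x.
Variables (r0 : nat).
Hypothesis hr0 : (W r0.+1 <= W r0)%MS.

Local Notation E := (D * dt)%N.

Definition Hm : 'M[K]_(k, E) := \matrix_(i < k) mxvec (X i).
Definition Kv s : 'M[K]_E := kermx (lin_mx (mulmx (B s) : 'M[K]_(D, dt) -> 'M[K]_(D, dt))).

Lemma KvP s (z : 'rV[K]_E) : (z <= Kv s)%MS = (B s *m vec_mx z == 0).
Proof. by rewrite sub_kermx -{1}(vec_mxK z) mul_vec_lin mxvec_eq0. Qed.

Lemma vanish m1 m2 (M : 'M[K]_(m1, D)) (N : 'M[K]_(m2, D)) (Z : 'M[K]_(D, dt)) :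
  (M <= N)%MS -> N *m Z = 0 -> M *m Z = 0.
Proof. by case/submxP => c -> h; rewrite -mulmxA h mulmx0. Qed.

Definition Hs s : 'M[K]_E := (Hm :&: Kv s)%MS.
Definition Cs s : 'M[K]_E := (Hs s :\: Hs s.+1)%MS.

Lemma Kv_dec s : (Kv s.+1 <= Kv s)%MS.
Proof.
apply/row_subP => i; rewrite KvP; have := row_sub i (Kv s.+1); rewrite KvP => /eqP h.
by apply/eqP; apply: vanish h; apply: B_W.
Qed.

Lemma Hs_dec s : (Hs s.+1 <= Hs s)%MS.
Proof. by apply: capmxS => //; apply: Kv_dec. Qed.

Lemma Hs_sum s : (Cs s + Hs s.+1 :=: Hs s)%MS.
Proof.
move/capmx_idPr: (Hs_dec s) => e.
apply: eqmx_trans _ (addsmx_diff_cap_eq (Hs s) (Hs s.+1)).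
exact: adds_eqmx (eqmx_refl _) (eqmx_sym e).
Qed.

Lemma CH_cap s : (Cs s :&: Hs s.+1)%MS = 0.
Proof. exact: capmx_diff. Qed.

Fixpoint Qm s : 'M[K]_E :=
  if s is s'.+1 then Qm s' *m proj_mx (Hs s'.+1) (Cs s') else 1%:M.
Definition Pim s : 'M[K]_E := Qm s *m proj_mx (Cs s) (Hs s.+1).

Lemma Q_H (y : 'rV[K]_E) s : (y <= Hm)%MS -> (y *m Qm s <= Hs s)%MS.
Proof.
case: s => [|s] hy /=; last by rewrite mulmxA proj_mx_sub.
by rewrite mulmx1 sub_capmx hy KvP mul0mx eqxx.
Qed.

Lemma Q_split (y : 'rV[K]_E) s : (y <= Hm)%MS -> y *m Qm s = y *m Pim s + y *m Qm s.+1.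
Proof.
move=> hy; rewrite /Pim; change (Qm s.+1) with (Qm s *m proj_mx (Hs s.+1) (Cs s)).
rewrite (mulmxA y (Qm s) (proj_mx (Cs s) (Hs s.+1))) (mulmxA y (Qm s) (proj_mx (Hs s.+1) (Cs s))).
rewrite add_proj_mx //; first exact: CH_cap.
by rewrite (Hs_sum s) Q_H.
Qed.

Lemma telescope (y : 'rV[K]_E) N : (y <= Hm)%MS -> y = \sum_(s < N) y *m Pim s + y *m Qm N.
Proof.
move=> hy; elim: N => [|N IH]; first by rewrite big_ord0 add0r /= mulmx1.
by rewrite big_ord_recr /= -addrA -Q_split.
Qed.

Lemma vec_mx_eq0 (z : 'rV[K]_E) : vec_mx z = 0 -> z = 0.
Proof. by move=> h; rewrite -(vec_mxK z) h; apply/eqP; rewrite mxvec_eq0. Qed.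

Lemma Q_end (y : 'rV[K]_E) : (y <= Hm)%MS -> y *m Qm r0.+1 = 0.
Proof.
move=> hy; have := Q_H r0.+1 hy; rewrite sub_capmx => /andP [_]; rewrite KvP BS => /eqP h.
apply: vec_mx_eq0; rewrite -[vec_mx _]mul1mx; apply: vanish h.
exact: cyclic.
Qed.

Lemma Pim_C (y : 'rV[K]_E) s : (y *m Pim s <= Cs s)%MS.
Proof. by rewrite /Pim mulmxA proj_mx_sub. Qed.

Lemma Pim_Hs (y : 'rV[K]_E) s : (y *m Pim s <= Hs s)%MS.
Proof. exact: submx_trans (Pim_C y s) (diffmxSl _ _). Qed.

Lemma Pim_Hm (y : 'rV[K]_E) s : (y *m Pim s <= Hm)%MS.
Proof. by have := Pim_Hs y s; rewrite sub_capmx => /andP []. Qed.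

Lemma Pim_Kv (y : 'rV[K]_E) s : (y *m Pim s <= Kv s)%MS.
Proof. by have := Pim_Hs y s; rewrite sub_capmx => /andP []. Qed.

Lemma intertw (z : 'rV[K]_E) x : (z <= Hm)%MS -> in_sl x ->
  A x 1 *m vec_mx z = vec_mx z *m rhot x.
Proof.
case/submxP => a -> hx.
have -> : vec_mx (a *m Hm) = \sum_(i < k) a 0 i *: X i.
  rewrite mulmx_sum_row linear_sum; apply: eq_bigr => i _.
  by rewrite linearZ /= rowK mxvecK.
rewrite mulmx_sumr mulmx_suml; apply: eq_bigr => i _.
by rewrite -scalemxAr -scalemxAl hX.
Qed.

Definition Zm (y : 'rV[K]_E) s : 'M[K]_(D, dt) := vec_mx (y *m Pim s).
Definition psi (y : 'rV[K]_E) (g : nat -> 'rV[K]_D) : 'rV[K]_dt :=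
  \sum_(s < r0.+1) g s *m Zm y s.

Lemma Zm_B y s : B s *m Zm y s = 0.
Proof. by apply/eqP; rewrite -KvP; apply: Pim_Kv. Qed.

Lemma psi_equiv y (g : nat -> 'rV[K]_D) x : in_sl x -> (forall r, (g r <= G r)%MS) ->
  psi y (gr_act A w x 1 g) = psi y g *m rhot x.
Proof.
move=> hx hg; rewrite /psi mulmx_suml; apply: eq_bigr => s _.
rewrite act1.
have hv : (g s *m A x 1 <= W s)%MS.
  by apply: submx_trans (submxMr _ (W_G (hg s))) (W_mul1 s hx).
have -> : g s *m A x 1 *m Pj s *m Zm y s = g s *m A x 1 *m Zm y s.
  apply/eqP; rewrite -subr_eq0 -mulmxBl -opprB mulNmx oppr_eq0; apply/eqP.
  by apply: vanish (Pj_res hv) (Zm_B y s).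
by rewrite -!mulmxA intertw ?Pim_Hm.
Qed.

Lemma psi_linY (cf : 'I_k -> K) (Y : 'I_k -> 'rV[K]_E) g :
  psi (\sum_(i < k) cf i *: Y i) g = \sum_(i < k) cf i *: psi (Y i) g.
Proof.
rewrite /psi /Zm; under eq_bigr => s _ do rewrite mulmx_suml linear_sum mulmx_sumr.
rewrite exchange_big /=; apply: eq_bigr => i _; rewrite scaler_sumr.
by apply: eq_bigr => s _; rewrite -scalemxAl linearZ -scalemxAr.
Qed.

Lemma psi_delta y s v : (s < r0.+1)%N -> psi y (delta s v) = v *m Zm y s.
Proof.
move=> hs; rewrite /psi (bigD1 (Ordinal hs)) //= big1 ?addr0 /delta ?eqxx //.
move=> t ht; case: eqP => [e|_]; last by rewrite mul0mx.
by move: ht; rewrite -(inj_eq val_inj) /= e eqxx.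
Qed.

Lemma delta_gr s v : (v <= G s)%MS -> in_gr A w (delta s v).
Proof. by move=> hv r; rewrite /delta; case: eqP => [->|_] //; apply: sub0mx. Qed.

Lemma indep y : (y <= Hm)%MS -> (forall g, in_gr A w g -> psi y g = 0) -> y = 0.
Proof.
move=> hy hpsi.
have hs : forall s, (s < r0.+1)%N -> y *m Pim s = 0.
  move=> s hs.
  have hG : G s *m Zm y s = 0.
    apply/row_matrixP => a; rewrite row_mul row0.
    rewrite -psi_delta // hpsi //; apply: delta_gr; exact: row_sub.
  have hW : W s *m Zm y s = 0.
    have : (W s <= G s + B s)%MS by rewrite (GB_add s).
    case/sub_addsmxP => u ->; rewrite mulmxDl -!mulmxA hG Zm_B !mulmx0 addr0 //.
  apply/eqP; rewrite -submx0 -(CH_cap s) sub_capmx Pim_C /= sub_capmx Pim_Hm /=.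
  by rewrite KvP BS; apply/eqP.
rewrite (telescope r0.+1 hy) Q_end // addr0 big1 // => s _.
exact: hs.
Qed.

Lemma part2_core (VF : lmodType K) (aF : 'M[K]_n -> {poly K} -> VF -> VF)
  (phi : VF -> nat -> 'rV[K]_D) :
  (forall u, in_gr A w (phi u)) ->
  (forall c u u' r, phi (c *: u + u') r = c *: phi u r + phi u' r) ->
  (forall x p u r, in_sl x -> phi (aF x p u) r = gr_act A w x p (phi u) r) ->
  (forall g, in_gr A w g -> exists u, forall r, phi u r = g r) ->
  (forall cf : 'I_k -> K, \sum_(i < k) cf i *: X i = 0 -> forall i, cf i = 0) ->
  exists phis : 'I_k -> VF -> 'rV[K]_dt,
    [/\ forall i c u u', phis i (c *: u + u') = c *: phis i u + phis i u',
        forall i x u, in_sl x -> phis i (aF x 1 u) = phis i u *m rhot x &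
        forall cf : 'I_k -> K,
          (forall u, \sum_(i < k) cf i *: phis i u = 0) -> forall i, cf i = 0].
Proof.
move=> h1 h2 h3 h4 hind.
have psi_ext : forall y (g g' : nat -> 'rV[K]_D), (forall r, g r = g' r) -> psi y g = psi y g'.
  by move=> y g g' e; rewrite /psi; apply: eq_bigr => s _; rewrite e.
exists (fun i u => psi (mxvec (X i)) (phi u)); split.
- move=> i c u u'; rewrite (psi_ext _ _ _ (h2 c u u')) /psi scaler_sumr -big_split /=.
  by apply: eq_bigr => s _; rewrite mulmxDl -scalemxAl.
- move=> i x u hx; rewrite (psi_ext _ _ _ (h3 x 1 u^~ hx)) psi_equiv //.
  exact: h1.
move=> cf hcf.
set y := \sum_(i < k) cf i *: mxvec (X i).
have hy : (y <= Hm)%MS.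
  apply: summx_sub => i _; apply: scalemx_sub.
  by have := row_sub i Hm; rewrite rowK.
have y0 : y = 0.
  have := @indep y hy; apply => g hg.
  have [u hu] := h4 g hg.
  rewrite -(psi_ext _ _ _ hu) psi_linY.
  exact: hcf.
apply: hind; apply/eqP; rewrite -mxvec_eq0; apply/eqP.
by rewrite linear_sum /=; under eq_bigr => i _ do rewrite linearZ /=.
Qed.
End P2.

Lemma part2 (VF : lmodType K) (aF : 'M[K]_n -> {poly K} -> VF -> VF)
  (phi : VF -> nat -> 'rV[K]_D) :
  (forall u, in_gr A w (phi u)) ->
  (forall c u u' r, phi (c *: u + u') r = c *: phi u r + phi u' r) ->
  (forall x p u r, in_sl x -> phi (aF x p u) r = gr_act A w x p (phi u) r) ->
  (forall g, in_gr A w g -> exists u, forall r, phi u r = g r) ->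
  (forall (lt : domwt n) (dt : nat) (rhot : 'M[K]_n -> 'M[K]_dt)
          (vt : 'rV[K]_dt),
     is_simple_hw lt rhot vt ->
     forall (k : nat) (X : 'I_k -> 'M[K]_(D, dt)),
       (forall i x, in_sl x -> A x 1 *m X i = X i *m rhot x) ->
       (forall cf : 'I_k -> K, \sum_(i < k) cf i *: X i = 0 -> forall i, cf i = 0) ->
       exists phis : 'I_k -> VF -> 'rV[K]_dt,
         [/\ forall i c u u', phis i (c *: u + u') = c *: phis i u + phis i u',
             forall i x u, in_sl x -> phis i (aF x 1 u) = phis i u *m rhot x &
             forall cf : 'I_k -> K,
               (forall u, \sum_(i < k) cf i *: phis i u = 0) -> forall i, cf i = 0]).
Proof.
move=> h1 h2 h3 h4 lt dt rhot vt _ k X hX hind.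
have [r0 hr0] := exists_stab.
exact: (part2_core hX hr0 h1 h2 h3 h4 hind).
Qed.
End Main.

Theorem lemma5p2 (R : realType) (n : nat) (l1 l2 : domwt n) (c1 c2 : R[i])
  (hc : c1 != c2)
  (d1 : nat) (rho1 : 'M[R[i]]_n -> 'M[R[i]]_d1) (v1 : 'rV[R[i]]_d1)
  (H1 : is_simple_hw l1 rho1 v1)
  (d2 : nat) (rho2 : 'M[R[i]]_n -> 'M[R[i]]_d2) (v2 : 'rV[R[i]]_d2)
  (H2 : is_simple_hw l2 rho2 v2)
  (VF : lmodType R[i]) (aF : 'M[R[i]]_n -> {poly R[i]} -> VF -> VF) (one : VF)
  (HF : is_F l1 l2 aF one) :
  let A := tens_act rho1 rho2 c1 c2 in
  let w : 'rV[R[i]]_(d1 * d2) := v1 *t v2 in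
  (exists phi : VF -> nat -> 'rV[R[i]]_(d1 * d2),
    [/\ forall u, in_gr A w (phi u),
        forall c u u' r, phi (c *: u + u') r = c *: phi u r + phi u' r,
        forall x p u r, in_sl x -> phi (aF x p u) r = gr_act A w x p (phi u) r &
        forall g, in_gr A w g -> exists u, forall r, phi u r = g r])
  /\
  (forall (lt : domwt n) (dt : nat) (rhot : 'M[R[i]]_n -> 'M[R[i]]_dt)
          (vt : 'rV[R[i]]_dt),
     is_simple_hw lt rhot vt ->
     forall (k : nat) (X : 'I_k -> 'M[R[i]]_(d1 * d2, dt)),
       (forall i x, in_sl x -> A x 1 *m X i = X i *m rhot x) ->
       (forall cf : 'I_k -> R[i], \sum_(i < k) cf i *: X i = 0 -> forall i, cf i = 0) ->
       exists phis : 'I_k -> VF -> 'rV[R[i]]_dt,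
         [/\ forall i c u u', phis i (c *: u + u') = c *: phis i u + phis i u',
             forall i x u, in_sl x -> phis i (aF x 1 u) = phis i u *m rhot x &
             forall cf : 'I_k -> R[i],
               (forall u, \sum_(i < k) cf i *: phis i u = 0) -> forall i, cf i = 0]).
Proof.
move=> A w.
have [phi [h1 h2 h3 h4]] := part1 hc H1 H2 HF.
split; first by exists phi.
exact: (part2 hc H1 H2 h1 h2 h3 h4).
Qed.
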